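(* Let $a,b\in\mathbb{N}$ with $a\ge b$, let $T(a,b)$ be the classical Jacobi operator, fix $k\in\{0,1,\ldots,b-1\}$ and let $E_k$ be the eigenspace of $T(a,b)$ for the eigenvalue $(k+1)(k-a-b)$. Then $E_k$ is 2-dimensional and consists of rational functions. There are three distinct one-dimensional subspaces $L_2,L_3,L_4\subset E_k$ such that: every nonzero element of $L_2$ is a type 2 eigenfunction of index $k$ and degree $k-a-b$; every nonzero element of $L_3$ is a type 3 eigenfunction of index $a-k-1$ and degree $-k-1$; every nonzero element of $L_4$ is a type 4 eigenfunction of index $b-k-1$ and degree $-k-1$; and every element of $E_k\setminus(L_2\cup L_3\cup L_4)$ is a type 2 eigenfunction of index $a+b-k-1$ and degree $-k-1$.
   Context: $D=d/dx$; $T(a,b)=(x^2-1)\big(D^2+(\frac{a+1}{x-1}+\frac{b+1}{x+1})D\big)$. For a nonzero eigenfunction $\phi$ with $w=\phi'/\phi$ rational: its asymptotic type is 1 if $w$ is regular at $x=\pm1$, 2 if $w$ has poles at both $x=1$ and $x=-1$, 3 if it has a pole at $x=1$ but not at $x=-1$, 4 if it has a pole at $x=-1$ but not at $x=1$; its degree is $\lim_{x\to\infty}xw(x)$ (for rational $\phi$, degree of numerator minus degree of denominator); its index is $\deg\phi-d_\imath$ where $\imath$ is its type and $d_1=0$, $d_2=-a-b$, $d_3=-a$, $d_4=-b$. *)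

(* Defs.v *)
From mathcomp Require Import all_boot all_order all_algebra.
From mathcomp Require Import all_classical all_reals all_analysis.
Set Implicit Arguments. Unset Strict Implicit. Unset Printing Implicit Defensive.
Import Order.TTheory GRing.Theory Num.Theory.
Local Open Scope ring_scope.

Section Jacobi.
Variable R : realType.

(* Functions are considered on the open interval ]l, r[ (which avoids +-1). *)
Definition inI (l r x : R) : bool := (l < x) && (x < r).

Definition jacobi_eig (a b : nat) (lam l r : R) (f : R -> R) : Prop :=
  forall x, inI l r x ->
    derivable f x 1 /\ derivable (derive1 f) x 1 /\
    (x ^+ 2 - 1) * (derive1 (derive1 f) x
       + ((a.+1)%:R / (x - 1) + (b.+1)%:R / (x + 1)) * derive1 f x)
    = lam * f x.

Definition eqI (l r : R) (f g : R -> R) : Prop :=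
  forall x, inI l r x -> f x = g x.

Definition lin_indep (l r : R) (f g : R -> R) : Prop :=
  forall c1 c2 : R, eqI l r (fun x => c1 * f x + c2 * g x) (fun => 0) ->
    c1 = 0 /\ c2 = 0.

Definition rat_rep (l r : R) (f : R -> R) (p q : {poly R}) : Prop :=
  q != 0 /\ forall x, inI l r x -> q.[x] != 0 /\ f x = p.[x] / q.[x].

Definition regular_at (n d : {poly R}) (c : R) : Prop :=
  exists n' d' : {poly R}, d'.[c] != 0 /\ n * d' = n' * d.

(* w = phi'/phi for phi = p/q is the rational function wnum/wden *)
Definition wnum (p q : {poly R}) : {poly R} := deriv p * q - p * deriv q.
Definition wden (p q : {poly R}) : {poly R} := p * q.

Definition has_type (p q : {poly R}) (i : nat) : Prop :=
  let n := wnum p q in let d := wden p q in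
  match i with
  | 1 => regular_at n d 1 /\ regular_at n d (-1)
  | 2 => ~ regular_at n d 1 /\ ~ regular_at n d (-1)
  | 3 => ~ regular_at n d 1 /\ regular_at n d (-1)
  | 4 => regular_at n d 1 /\ ~ regular_at n d (-1)
  | _ => False
  end%N.

Definition rdeg (p q : {poly R}) : int := (size p)%:Z - (size q)%:Z.

End Jacobi.

Definition dtype (a b i : nat) : int :=
  match i with
  | 2 => - (a%:Z + b%:Z)
  | 3 => - a%:Z
  | 4 => - b%:Z
  | _ => 0
  end%N.

Definition typed_eigenfunction (R : realType) (a b : nat) (lam l r : R)
    (f : R -> R) (i : nat) (m delta : int) : Prop :=
  jacobi_eig a b lam l r f /\ (exists x, inI l r x /\ f x != 0) /\
  exists p q : {poly R}, rat_rep l r f p q /\ has_type p q i /\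
    rdeg p q = delta /\ rdeg p q - dtype a b i = m.

(* Main.v *)
Require Import Defs.
From mathcomp Require Import all_boot all_order all_algebra.
From mathcomp Require Import all_classical all_reals all_analysis.
From mathcomp Require Import ring lra zify.
Import Order.TTheory GRing.Theory Num.Theory.
Import numFieldNormedType.Exports.
Local Open Scope ring_scope.

Section Calc.
Variable R : realType.

Lemma rat_is_derive (N D : {poly R}) x : D.[x] != 0 ->
  is_derive x 1 (fun y => N.[y] / D.[y])
    ((N^`() * D - N * D^`()).[x] / (D * D).[x]).
Proof.
move=> Dx.
have H := is_deriveM (is_derive_poly N x) (is_deriveV Dx (is_derive_poly D x)).
have -> : (fun y => N.[y] / D.[y]) = (horner N * (fun y => (D.[y])^-1)) by apply/funext.
apply: is_derive_eq H _.
rewrite !hornerE /=. rewrite /GRing.scale /=. field. exact: Dx.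
Qed.
End Calc.

Section Calc2.
Variable R : realType.

Lemma rat_second (N D : {poly R}) (x : R) : (\forall y \near x, D.[y] != 0) -> D.[x] != 0 ->
  is_derive x 1 (derive1 (fun y => N.[y] / D.[y]))
   (((N^`() * D - N * D^`())^`() * (D*D) - (N^`() * D - N * D^`()) * (D*D)^`()).[x]
      / ((D*D)*(D*D)).[x]).
Proof.
move=> Dn.
move=> Dx.
apply: (@near_eq_is_derive _ _ _ (fun y => (N^`() * D - N * D^`()).[y] / (D * D).[y])).
  near=> y.
  have Dy : D.[y] != 0 by near: y.
  have [_ H] := @rat_is_derive R N D y Dy.
  by rewrite derive1E H.
by apply: (@rat_is_derive R); rewrite hornerM mulf_neq0.
Unshelve. all: by end_near.
Qed.
End Calc2.
Section Main.
Variable R : realType.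
Variables a b k : nat.

Definition lamp : R := k%:R * (k%:R + 1 - a%:R - b%:R).
Definition Lop (N : {poly R}) : {poly R} :=
  ('X^2 - 1) * N^`()^`() + ((2 - a%:R - b%:R) *: 'X + (b%:R - a%:R)%:P) * N^`()
  - lamp *: N.
Definition c0y (s : R) : R := (2 - a%:R - b%:R) * s + b%:R - a%:R.
Definition Ly (s : R) (M : {poly R}) : {poly R} :=
  ('X^2 + (2 * s) *: 'X) * M^`()^`() + ((2 - a%:R - b%:R) *: 'X + (c0y s)%:P) * M^`()
  - lamp *: M.
Definition Dc (j : nat) : R := j%:R * (j%:R - 1) + (2 - a%:R - b%:R) * j%:R - lamp.
Definition Ec (s : R) (j : nat) : R := 2 * s * j%:R * (j%:R - 1) + c0y s * j%:R.

Lemma coef_Ly s M j : (Ly s M)`_j = M`_j * Dc j + M`_j.+1 * Ec s j.+1.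
Proof.
rewrite /Ly !mulrDl -!scalerAl !coefB !coefD !coefZ !coefCM coefXnM !coefXM.
rewrite /Dc /Ec. case: j => [|[|j]] /=; rewrite ?subn2 /= !coef_deriv /=.
all: set L := lamp; set C := c0y s; ring.
Qed.

Lemma Lop_comp s M : s ^+ 2 = 1 ->
  Lop (M \Po ('X - s%:P)) = (Ly s M) \Po ('X - s%:P).
Proof.
move=> hs.
rewrite /Lop /Ly !(deriv_comp, derivXsubC, mulr1).
rewrite !comp_polyB !comp_polyD !comp_polyM !comp_polyD !comp_polyZ !comp_polyX !comp_polyC comp_Xn_poly.
have E1 : ('X - s%:P)^+2 + (2*s) *: ('X - s%:P) = 'X^2 - 1.
  have -> : (1 : {poly R}) = s%:P * s%:P by rewrite -polyCM -expr2 hs.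
  rewrite -!mul_polyC polyCM polyCMn polyC1. ring.
have E2 : (2 - a%:R - b%:R) *: ('X - s%:P) + (c0y s)%:P
          = (2 - a%:R - b%:R) *: 'X + (b%:R - a%:R)%:P.
  rewrite -!mul_polyC /c0y !(polyCD, polyCB, polyCM). ring.
by rewrite E1 E2.
Qed.

Lemma Dc_fact j : Dc j = (j%:R - k%:R) * (j%:R + k%:R + 1 - a%:R - b%:R).
Proof. rewrite /Dc /lamp; ring. Qed.

Section Constr.
Variables (s : R) (e : nat).
Hypothesis hs1 : s = 1 \/ s = -1.
Hypothesis hc : c0y s = s * (2 - 2 * e%:R).
Hypothesis hke : (k < e)%N.
Hypothesis hek : (e + k < a + b)%N.

Lemma Ec_fact j : Ec s j = 2 * s * j%:R * (j%:R - e%:R).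
Proof. rewrite /Ec hc; ring. Qed.

Lemma s_neq0 : s != 0.
Proof. by case: hs1 => ->; rewrite ?oppr_eq0 oner_eq0. Qed.

Lemma Ec_neq0 j : (0 < j)%N -> j != e -> Ec s j != 0.
Proof.
move=> j0 je; rewrite Ec_fact !mulf_neq0 ?s_neq0 ?pnatr_eq0 -?lt0n //.
by rewrite subr_eq0 eqr_nat.
Qed.

Fixpoint cq (i : nat) : R :=
  match i with 0 => 1 | i'.+1 => - cq i' * Dc (i' + e) / Ec s (i' + e).+1 end.
Definition cs (j : nat) : R := if (j < e)%N then 0 else cq (j - e).

Definition nn := (a + b - k.+1)%N.

Lemma Dc_nn : Dc nn = 0.
Proof.
rewrite Dc_fact /nn natrB; last lia.
rewrite natrD -addn1 natrD; apply/eqP; rewrite mulf_eq0; apply/orP; right; apply/eqP; ring.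
Qed.

Lemma e_le_nn : (e <= nn)%N.
Proof. rewrite /nn; lia. Qed.

Lemma cs_rel j : cs j * Dc j + cs j.+1 * Ec s j.+1 = 0.
Proof.
rewrite /cs; case: (ltngtP j.+1 e) => hj.
- by rewrite !mul0r addr0.
- have -> : (j.+1 - e = (j - e).+1)%N by lia.
  rewrite /=.
  have -> : (j - e + e = j)%N by lia.
  have hE : Ec s j.+1 != 0 by apply: Ec_neq0; lia.
  by field.
- by rewrite Ec_fact hj subrr !mulr0 mul0r add0r.
Qed.

Lemma cq_zero i : (nn - e < i)%N -> cq i = 0.
Proof.
elim: i => [|i IH] hi; first by [].
rewrite /=; case: (ltngtP (nn - e) i) => h.
- by rewrite IH // oppr0 !mul0r.
- lia.
- have -> : (i + e = nn)%N by have := e_le_nn; lia.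
  by rewrite Dc_nn !mulr0 mul0r.
Qed.

Lemma cq_neq0 i : (i <= nn - e)%N -> cq i != 0.
Proof.
elim: i => [|i IH] hi; first by rewrite oner_eq0.
have hq : cq i != 0 by apply: IH; lia.
have hE : Ec s (i + e).+1 != 0 by apply: Ec_neq0; lia.
rewrite /= !mulf_neq0 ?invr_neq0 ?oppr_eq0 //.
- rewrite Dc_fact mulf_neq0 //.
    by rewrite subr_eq0 eqr_nat; lia.
  have -> : (i + e)%:R + k%:R + 1 - a%:R - b%:R = (i + e + k + 1)%:R - (a + b)%:R :> R
    by rewrite !natrD; ring.
  by rewrite subr_eq0 eqr_nat; rewrite /nn in hi; lia.
Qed.

Definition Mc : {poly R} := \poly_(j < nn.+1) cs j.
Definition Qc : {poly R} := \poly_(i < (nn - e).+1) cq i.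

Lemma coef_Mc j : Mc`_j = cs j.
Proof.
rewrite /Mc coef_poly; case: ltnP => // hj.
rewrite /cs; case: ltnP => // hje; rewrite cq_zero //; have := e_le_nn; lia.
Qed.

Lemma Mc_eq : Mc = 'X^e * Qc.
Proof.
apply/polyP => j; rewrite coef_Mc coefXnM /Qc coef_poly /cs.
case: ltnP => // hj; case: ltnP => // hj2.
rewrite cq_zero //; have := e_le_nn; lia.
Qed.

Lemma Ly_Mc : Ly s Mc = 0.
Proof. by apply/polyP => j; rewrite coef_Ly !coef_Mc cs_rel coef0. Qed.

Lemma size_Qc : size Qc = (nn - e).+1.
Proof. by rewrite /Qc size_poly_eq // cq_neq0. Qed.

Lemma s2 : s ^+ 2 = 1.
Proof. by case: hs1 => ->; rewrite ?sqrrN expr1n. Qed.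

Lemma exists_sol : exists Q : {poly R},
  Lop (('X - s%:P)^+e * Q) = 0 /\ Q.[s] = 1 /\ size Q = (a + b - k - e)%N.
Proof.
exists (Qc \Po ('X - s%:P)); split; [|split].
- rewrite -comp_Xn_poly -comp_polyM -Mc_eq Lop_comp ?s2 // Ly_Mc.
  by rewrite comp_polyC.
- by rewrite horner_comp !hornerE subrr horner_coef0 /Qc coef_poly.
- rewrite size_comp_poly2 ?size_XsubC // size_Qc /nn; have := e_le_nn; rewrite /nn; lia.
Qed.


Lemma XsubXadd (t : R) : ('X - t%:P) \Po ('X + t%:P) = 'X.
Proof. by rewrite comp_polyB comp_polyX comp_polyC addrK. Qed.
Lemma XaddXsub (t : R) : ('X + t%:P) \Po ('X - t%:P) = 'X.
Proof. by rewrite comp_polyD comp_polyX comp_polyC subrK. Qed.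

Lemma order_sol N : Lop N = 0 -> N.[s] = 0 -> ('X - s%:P)^+e %| N.
Proof.
move=> HL Ns.
set M := N \Po ('X + s%:P).
have NM : N = M \Po ('X - s%:P).
  by rewrite /M -comp_polyA XaddXsub comp_polyXr.
have LyM : Ly s M = 0.
  rewrite NM Lop_comp ?s2 // in HL.
  have -> : Ly s M = (Ly s M \Po ('X - s%:P)) \Po ('X + s%:P).
    by rewrite -comp_polyA XsubXadd comp_polyXr.
  by rewrite HL comp_poly0.
have M0 : M`_0 = 0 by rewrite -horner_coef0 /M horner_comp !hornerE ?add0r.
have Mj : forall j, (j < e)%N -> M`_j = 0.
  elim=> [//|j IH] hj.
  have := coef_Ly s M j; rewrite LyM coef0 IH; last lia.
  rewrite mul0r add0r => /esym/eqP; rewrite mulf_eq0 => /orP[/eqP //|].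
  have hE : Ec s j.+1 != 0 by apply: Ec_neq0; lia.
  by rewrite (negPf hE).
set M2 := \poly_(i < size M) M`_(i + e).
have ME : M = 'X^e * M2.
  apply/polyP => j; rewrite coefXnM /M2 coef_poly.
  case: ltnP => hj; first by rewrite Mj.
  case: ltnP => hj2; first by rewrite subnK.
  by rewrite nth_default // (leq_trans hj2) ?leq_subr.
by rewrite NM ME comp_polyM comp_Xn_poly dvdp_mulIl.
Qed.
End Constr.


Definition Ux : {poly R} := 'X - 1%:P.
Definition Vx : {poly R} := 'X - (-1)%:P.
Definition Dab : {poly R} := Ux ^+ a * Vx ^+ b.
Definition lam : R := (k.+1)%:R * (k%:R - a%:R - b%:R).

Lemma expm1_mul (p : {poly R}) n : p ^+ n.-1 * p *+ n = p ^+ n *+ n.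
Proof. by case: n => [|n]; rewrite ?mulr0n // -exprSr. Qed.

Lemma pow_deriv (m n : nat) : (Ux ^+ m * Vx ^+ n)^`() * (Ux * Vx)
   = (Ux ^+ m * Vx ^+ n) * (m%:R *: Vx + n%:R *: Ux).
Proof.
rewrite derivM !deriv_exp /Ux /Vx !derivXsubC !mul1r.
set U := 'X - 1%:P; set V := 'X - (-1)%:P.
have -> : (U ^+ m.-1 *+ m * V ^+ n + U ^+ m * (V ^+ n.-1 *+ n)) * (U * V)
   = (U ^+ m.-1 * U *+ m) * V ^+ n * V + (V ^+ n.-1 * V *+ n) * U ^+ m * U by ring.
rewrite !expm1_mul -!mul_polyC. ring.
Qed.

Lemma Dab_deriv : Dab^`() * (Ux * Vx) = Dab * (a%:R *: Vx + b%:R *: Ux).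
Proof. exact: pow_deriv. Qed.

Lemma Ux_val x : Ux.[x] = x - 1. Proof. by rewrite /Ux !hornerE. Qed.
Lemma Vx_val x : Vx.[x] = x + 1. Proof. by rewrite /Vx !hornerE opprK. Qed.
Lemma Dab_val x : Dab.[x] = (x - 1) ^+ a * (x + 1) ^+ b.
Proof. by rewrite /Dab hornerM !horner_exp Ux_val Vx_val. Qed.

Lemma Dab_neq0 x : x != 1 -> x != -1 -> Dab.[x] != 0.
Proof.
move=> h1 h2; rewrite Dab_val mulf_neq0 // expf_neq0 //.
  by rewrite subr_eq0.
by rewrite addr_eq0.
Qed.

Lemma jac_core (N D : {poly R}) (x : R) : x != 1 -> x != -1 -> D.[x] != 0 ->
  Lop N = 0 -> D^`() * (Ux * Vx) = D * (a%:R *: Vx + b%:R *: Ux) ->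
  (x ^+ 2 - 1) *
   (((N^`() * D - N * D^`())^`() * (D*D) - (N^`() * D - N * D^`()) * (D*D)^`()).[x]
      / ((D*D)*(D*D)).[x]
    + ((a.+1)%:R / (x - 1) + (b.+1)%:R / (x + 1)) *
      ((N^`() * D - N * D^`()).[x] / (D * D).[x]))
  = lam * (N.[x] / D.[x]).
Proof.
move=> x1 x2 Dx HL HD.
have HN := congr1 (fun p => p.[x]) HL.
have HD1 := congr1 (fun p => p.[x]) HD.
have HD2 := congr1 (fun p => (p^`()).[x]) HD.
move: HN HD1 HD2 => /=.
rewrite /Lop /Ux /Vx !(derivM, derivB, derivD, derivXsubC, derivZ, derivC, derivX, derivXn, hornerE) /=.
set n2 := ((N^`())^`()).[x]; set n1 := (N^`()).[x]; set n0 := N.[x].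
set d2 := ((D^`())^`()).[x]; set d1 := (D^`()).[x]; set d0 := D.[x].
have Dx' : d0 != 0 by [].
clearbody n2 n1 n0 d2 d1 d0 => HN HD1 HD2.
have hu : x - 1 != 0 by rewrite subr_eq0.
have hv : x - -1 != 0 by rewrite opprK addr_eq0.
have hx2 : x ^+ 2 - 1 != 0.
  have -> : x ^+ 2 - 1 = (x - 1) * (x - -1) by ring.
  by rewrite mulf_neq0.
have hx1 : x + 1 != 0 by rewrite -[1]opprK.
have e1 : d1 = (d1 * (x - 1) * (x - -1)) / ((x - 1) * (x - -1)).
  by field; rewrite hx1 hu.
rewrite HD1 in e1.
have e2 : d2 = ((d2 * (x - 1) * (x - -1) + d1 * ((1 - 0) * (x - -1) + (x - 1) * (1 - 0)))
   - d1 * ((1 - 0) * (x - -1) + (x - 1) * (1 - 0))) / ((x - 1) * (x - -1)).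
  by field; rewrite hx1 hu.
rewrite HD2 in e2.
have e3 : n2 = ((x ^+ 2 - 1) * n2 + ((2 - a%:R - b%:R) * x + b%:R - a%:R) * n1 - lamp * n0
   - (((2 - a%:R - b%:R) * x + b%:R - a%:R) * n1 - lamp * n0)) / (x ^+ 2 - 1).
  by field.
rewrite HN in e3.
rewrite e3 e2 e1 /lam /lamp.
by field; rewrite Dx' hx1 hu hx2.
Qed.

Lemma jac_rat N (l r : R) : Lop N = 0 ->
  (forall x, inI l r x -> x != 1 /\ x != -1) ->
  jacobi_eig a b lam l r (fun y => N.[y] / Dab.[y]).
Proof.
move=> HL Hx x Ix.
have [x1 x2] := Hx x Ix.
have Dx := @Dab_neq0 x x1 x2.
have Dn : \forall y \near x, Dab.[y] != 0.
  have : x \in `]l, r[ by rewrite in_itv.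
  move=> /near_in_itvoo; apply: filterS => y; rewrite in_itv /= => Iy.
  by have [y1 y2] := Hx y Iy; apply: Dab_neq0.
have H1 := @rat_is_derive R N Dab x Dx.
have H2 := @rat_second R N Dab x Dn Dx.
split; first exact: ex_derive.
split; first exact: ex_derive.
rewrite [derive1 (derive1 _) x]derive1E (@derive_val _ _ _ _ _ _ _ H2).
rewrite [derive1 _ x]derive1E (@derive_val _ _ _ _ _ _ _ H1).
exact: (@jac_core N Dab x x1 x2 Dx HL Dab_deriv).
Qed.

Lemma reg_mul (h n d : {poly R}) c : h != 0 ->
  regular_at (h * n) (h * d) c <-> regular_at n d c.
Proof.
move=> h0; split => -[n' [d' [Hd E]]]; exists n', d'; split => //.
  by apply: (mulfI h0); rewrite mulrA E; ring.
by rewrite -mulrA E; ring.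
Qed.

Lemma not_reg n d (c : R) : n.[c] != 0 -> d.[c] = 0 -> ~ regular_at n d c.
Proof.
move=> nc dc [n' [d' [Hd E]]].
have := congr1 (fun p => p.[c]) E => /=; rewrite !hornerM dc mulr0 => /eqP.
by rewrite mulf_eq0 (negPf nc) (negPf Hd).
Qed.

Lemma reg_triv n d (c : R) : d.[c] != 0 -> regular_at n d c.
Proof. by move=> dc; exists n, d. Qed.

Lemma Ux_neq0 : Ux != 0.
Proof. by rewrite /Ux polyXsubC_eq0. Qed.
Lemma Vx_neq0 : Vx != 0.
Proof. by rewrite /Vx polyXsubC_eq0. Qed.

Lemma type_reg (P : {poly R}) (al be : nat) : P.[1] != 0 -> P.[-1] != 0 ->
  (regular_at (wnum P (Ux^+al * Vx^+be)) (wden P (Ux^+al * Vx^+be)) 1 <-> al = 0%N) /\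
  (regular_at (wnum P (Ux^+al * Vx^+be)) (wden P (Ux^+al * Vx^+be)) (-1) <-> be = 0%N).
Proof.
move=> P1 Pm1.
set q := Ux^+al * Vx^+be.
have Hq' := pow_deriv al be.
have q0 : q != 0 by rewrite mulf_neq0 // expf_neq0 // ?Ux_neq0 ?Vx_neq0.
have uv0 : Ux * Vx != 0 by rewrite mulf_neq0 // ?Ux_neq0 ?Vx_neq0.
have e1 : (Ux * Vx) * wnum P q
   = q * (P^`() * (Ux * Vx) - P * (al%:R *: Vx + be%:R *: Ux)).
  rewrite /wnum.
  have -> : (Ux * Vx) * (P^`() * q - P * q^`()) = P^`() * q * (Ux * Vx) - P * (q^`() * (Ux * Vx)) by ring.
  rewrite Hq' -/q; ring.
have e2 : (Ux * Vx) * wden P q = q * (P * (Ux * Vx)) by rewrite /wden; ring.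
have key : forall c, regular_at (wnum P q) (wden P q) c <->
   regular_at (P^`() * (Ux * Vx) - P * (al%:R *: Vx + be%:R *: Ux)) (P * (Ux * Vx)) c.
  move=> c; rewrite -(@reg_mul _ _ _ c uv0) e1 e2; exact: reg_mul.
have U1 : Ux.[1] = 0 by rewrite Ux_val subrr.
have V1 : Vx.[1] = 2 by rewrite Vx_val.
have Um1 : Ux.[-1] = -2 by rewrite Ux_val; ring.
have Vm1 : Vx.[-1] = 0 by rewrite Vx_val addNr.
have two0 : (2 : R) != 0 by rewrite pnatr_eq0.
split.
- rewrite key; split.
    case: al {q q0 Hq' e1 e2 key} => [//|al] Hr; exfalso; move: Hr; apply: not_reg.
      have -> : (P^`() * (Ux * Vx) - P * (al.+1%:R *: Vx + be%:R *: Ux)).[1]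
        = - (P.[1] * (al.+1%:R * 2)) by rewrite !(hornerD, hornerN, hornerM, hornerZ, hornerX, hornerC); ring.
      by rewrite oppr_eq0 !mulf_neq0 // pnatr_eq0.
    by rewrite !(hornerD, hornerN, hornerM, hornerZ, hornerX, hornerC); ring.
  move=> al0; rewrite al0 scale0r add0r.
  have -> : P^`() * (Ux * Vx) - P * (be%:R *: Ux) = Ux * (P^`() * Vx - be%:R *: P).
    by rewrite -!mul_polyC; ring.
  have -> : P * (Ux * Vx) = Ux * (P * Vx) by ring.
  rewrite reg_mul ?Ux_neq0 //; apply: reg_triv.
  by rewrite hornerM V1 mulf_neq0.
- rewrite key; split.
    case: be {q q0 Hq' e1 e2 key} => [//|be] Hr; exfalso; move: Hr; apply: not_reg.
      have -> : (P^`() * (Ux * Vx) - P * (al%:R *: Vx + be.+1%:R *: Ux)).[-1]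
        = - (P.[-1] * (be.+1%:R * (-2))) by rewrite !(hornerD, hornerN, hornerM, hornerZ, hornerX, hornerC); ring.
      by rewrite oppr_eq0 !mulf_neq0 // ?pnatr_eq0 // oppr_eq0.
    by rewrite !(hornerD, hornerN, hornerM, hornerZ, hornerX, hornerC); ring.
  move=> be0; rewrite be0 scale0r addr0.
  have -> : P^`() * (Ux * Vx) - P * (al%:R *: Vx) = Vx * (P^`() * Ux - al%:R *: P).
    by rewrite -!mul_polyC; ring.
  have -> : P * (Ux * Vx) = Vx * (P * Ux) by ring.
  rewrite reg_mul ?Vx_neq0 //; apply: reg_triv.
  by rewrite hornerM Um1 mulf_neq0 // oppr_eq0.
Qed.

Lemma poly_eq0_itv (l r : R) (p : {poly R}) : l < r ->
  (forall x, inI l r x -> p.[x] = 0) -> p = 0.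
Proof.
move=> lr H; case: (eqVneq p 0) => // p0; exfalso.
set f := fun i : nat => r - (r - l) / (i.+2)%:R.
have d0 : 0 < r - l by rewrite subr_gt0.
have finj : injective f.
  move=> i j /addrI /oppr_inj /(mulfI (lt0r_neq0 d0)) /invr_inj /eqP.
  by rewrite eqr_nat => /eqP [].
have fin : forall i, inI l r (f i).
  move=> i; rewrite /inI /f.
  have t2 : 2 <= (i.+2)%:R :> R by rewrite (ler_nat R 2 i.+2).
  have t0 : 0 < (i.+2)%:R :> R by rewrite ltr0n.
  have h1 : 0 < (r - l) / (i.+2)%:R by rewrite divr_gt0.
  have h2 : (r - l) / (i.+2)%:R < r - l by rewrite ltr_pdivrMr // ltr_pMr //; lra.
  move: h1 h2; set d := (r - l) / _ => h1 h2; apply/andP; split; lra.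
have Hall : all (root p) (mkseq f (size p)).
  by apply/allP => x /mapP[i _ ->]; rewrite /root H.
have Hu : uniq (mkseq f (size p)) by rewrite mkseq_uniq.
by have := max_poly_roots p0 Hall Hu; rewrite size_mkseq ltnn.
Qed.

Definition Mu : {poly R} := Ux ^+ a.+1 * Vx ^+ b.+1.

Lemma wronsk_deriv0 (l r : R) (f g : R -> R) x : x != 1 -> x != -1 ->
  jacobi_eig a b lam l r f -> jacobi_eig a b lam l r g -> inI l r x ->
  is_derive x 1 (fun y => Mu.[y] * (g y * derive1 f y - derive1 g y * f y)) 0.
Proof.
move=> x1 x2 Jf Jg Ix.
have [df [ddf Ef]] := Jf x Ix.
have [dg [ddg Eg]] := Jg x Ix.
have H := is_deriveM (is_derive_poly Mu x)
  (is_deriveB (is_deriveM (derivableP dg) (derivableP ddf))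
              (is_deriveM (derivableP ddg) (derivableP df))).
have -> : (fun y => Mu.[y] * (g y * derive1 f y - derive1 g y * f y))
   = (horner Mu * (g * derive1 f - derive1 g * f)) by apply/funext.
apply: is_derive_eq H _; rewrite !fctE.
rewrite -!derive1E /GRing.scale /=.
have HM := congr1 (fun p => p.[x]) (pow_deriv a.+1 b.+1).
move: HM Ef Eg => /=; rewrite -/Mu !(hornerD, hornerN, hornerM, hornerZ, hornerX, hornerC).
set f0 := f x; set f1 := derive1 f x; set f2 := derive1 (derive1 f) x.
set g0 := g x; set g1 := derive1 g x; set g2 := derive1 (derive1 g) x.
set m0 := Mu.[x]; set m1 := (Mu^`()).[x].
move=> HM Ef Eg.
have hu : x - 1 != 0 by rewrite subr_eq0.
have hv : x - -1 != 0 by rewrite opprK addr_eq0.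
have hx1 : x + 1 != 0 by rewrite -[1]opprK.
have hx2 : x ^+ 2 - 1 != 0.
  have -> : x ^+ 2 - 1 = (x - 1) * (x + 1) by ring.
  by rewrite mulf_neq0.
have e1 : m1 = (m1 * ((x - 1) * (x - -1))) / ((x - 1) * (x - -1)).
  by field; rewrite hx1 hu.
rewrite HM in e1.
have e2 : f2 = ((x ^+ 2 - 1) * (f2 + ((a.+1)%:R / (x - 1) + (b.+1)%:R / (x + 1)) * f1)) / (x ^+ 2 - 1)
   - ((a.+1)%:R / (x - 1) + (b.+1)%:R / (x + 1)) * f1.
  by field; rewrite hx1 hu.
have e3 : g2 = ((x ^+ 2 - 1) * (g2 + ((a.+1)%:R / (x - 1) + (b.+1)%:R / (x + 1)) * g1)) / (x ^+ 2 - 1)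
   - ((a.+1)%:R / (x - 1) + (b.+1)%:R / (x + 1)) * g1.
  by field; rewrite hx1 hu.
rewrite Ef in e2; rewrite Eg in e3.
rewrite e1 e2 e3.
by field; rewrite hx1 hu.
Qed.

Lemma cst_itv (F : R -> R) (l r : R) :
  (forall x, inI l r x -> is_derive x 1 F 0) ->
  forall x y, inI l r x -> inI l r y -> F x = F y.
Proof.
move=> HF.
suff H : forall x y, x <= y -> inI l r x -> inI l r y -> F x = F y.
  move=> x y Ix Iy; case: (leP x y) => xy; first exact: H.
  by apply/esym/H => //; exact: ltW.
move=> x y xy Ix Iy.
have sub : forall z, x <= z -> z <= y -> inI l r z.
  move: Ix Iy; rewrite /inI => /andP[lx xr] /andP[ly yr] z xz zy.
  apply/andP; split; lra.
have H1 : forall z, z \in `]x, y[ -> is_derive z 1 F ((fun=> 0) z).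
  move=> z; rewrite in_itv /= => /andP[xz zy]; apply: HF; apply: sub; exact: ltW.
have H2 : {within `[x, y], continuous F}%classic.
  apply: continuous_subspace_itv => z; rewrite in_itv /= => /andP[xz zy].
  have Iz := sub z xz zy.
  have [dz _] := HF z Iz.
  exact/differentiable_continuous/derivable1_diffP.
have [c _ Hc] := MVT_segment xy H1 H2.
by move: Hc; rewrite mul0r => /eqP; rewrite subr_eq0 => /eqP.
Qed.

Lemma itv_ne (l r : R) : l < r -> inI l r ((l + r) / 2).
Proof. by move=> lr; rewrite /inI; apply/andP; split; lra. Qed.

Definition Wr (f g : R -> R) (y : R) : R := Mu.[y] * (g y * derive1 f y - derive1 g y * f y).

Lemma wronsk_const (l r : R) (f g : R -> R) : l < r ->
  (forall x, inI l r x -> x != 1 /\ x != -1) ->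
  jacobi_eig a b lam l r f -> jacobi_eig a b lam l r g ->
  exists C, forall x, inI l r x -> Wr f g x = C.
Proof.
move=> lr Hx Jf Jg; exists (Wr f g ((l + r) / 2)) => x Ix.
apply: (@cst_itv (Wr f g) l r) => // [y Iy|]; last exact: itv_ne.
have [y1 y2] := Hx y Iy.
exact: (@wronsk_deriv0 l r f g y y1 y2 Jf Jg Iy).
Qed.

Lemma decomp (l r : R) (f g3 g4 : R -> R) (C34 : R) : l < r ->
  (forall x, inI l r x -> x != 1 /\ x != -1) ->
  jacobi_eig a b lam l r f -> jacobi_eig a b lam l r g3 ->
  jacobi_eig a b lam l r g4 -> C34 != 0 ->
  (forall x, inI l r x -> Wr g4 g3 x = C34) ->
  exists c1 c2 : R, eqI l r f (fun x => c1 * g3 x + c2 * g4 x).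
Proof.
move=> lr Hx Jf J3 J4 hC H34.
have [C3 H3] := @wronsk_const l r f g3 lr Hx Jf J3.
have [C4 H4] := @wronsk_const l r f g4 lr Hx Jf J4.
exists (- C4 / C34), (C3 / C34) => x Ix.
rewrite -(H3 x Ix) -(H4 x Ix) -(H34 x Ix).
rewrite -(H34 x Ix) /Wr in hC.
rewrite /Wr; field.
by move: hC; rewrite mulf_eq0 negb_or => /andP[-> ->].
Qed.

Lemma deg_sol N : Lop N = 0 -> N != 0 -> Dc (size N).-1 = 0.
Proof.
move=> HL N0.
set M := N \Po ('X + 1%:P).
have NM : N = M \Po ('X - 1%:P) by rewrite /M -comp_polyA XaddXsub comp_polyXr.
have LyM : Ly 1 M = 0.
  rewrite NM Lop_comp ?expr1n // in HL.
  have -> : Ly 1 M = (Ly 1 M \Po ('X - 1%:P)) \Po ('X + 1%:P).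
    by rewrite -comp_polyA XsubXadd comp_polyXr.
  by rewrite HL comp_poly0.
have sM : size M = size N by rewrite /M size_comp_poly2 // size_XaddC.
have M0 : M != 0 by rewrite -size_poly_eq0 sM size_poly_eq0.
have := coef_Ly 1 M (size N).-1; rewrite LyM coef0.
have sN : (0 < size N)%N by rewrite size_poly_gt0.
rewrite prednK // [M`_(size N)]nth_default ?sM // mul0r addr0 => /esym/eqP.
rewrite mulf_eq0 => /orP[|/eqP //].
have : lead_coef M != 0 by rewrite lead_coef_eq0.
by rewrite /lead_coef sM => /negPf ->.
Qed.

Lemma Lop_lin c d N M : Lop (c *: N + d *: M) = c *: Lop N + d *: Lop M.
Proof.
rewrite /Lop !(derivD, derivZ). rewrite -!mul_polyC. ring.
Qed.

Section Conc.
Hypothesis hb : (b <= a)%N.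
Hypothesis hk : (k < b)%N.
Variables Q3 Q4 : {poly R}.
Hypothesis HQ3 : Lop (Vx ^+ b * Q3) = 0.
Hypothesis Q3m1 : Q3.[-1] = 1.
Hypothesis sQ3 : size Q3 = (a + b - k - b)%N.
Hypothesis HQ4 : Lop (Ux ^+ a * Q4) = 0.
Hypothesis Q41 : Q4.[1] = 1.
Hypothesis sQ4 : size Q4 = (a + b - k - a)%N.

Lemma Ux_1 : Ux.[1] = 0. Proof. by rewrite Ux_val subrr. Qed.
Lemma Vx_m1 : Vx.[-1] = 0. Proof. by rewrite Vx_val addNr. Qed.
Lemma Ux_m1 : Ux.[-1] = -2. Proof. by rewrite Ux_val; ring. Qed.
Lemma Vx_1 : Vx.[1] = 2. Proof. by rewrite Vx_val. Qed.
Lemma two_neq0 : (2 : R) != 0. Proof. by rewrite pnatr_eq0. Qed.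
Lemma mtwo_neq0 : (-2 : R) != 0. Proof. by rewrite oppr_eq0 pnatr_eq0. Qed.

Definition N3 := Vx ^+ b * Q3.
Definition N4 := Ux ^+ a * Q4.

Lemma Q3_neq0 : Q3 != 0.
Proof. by rewrite -size_poly_eq0 sQ3; apply/eqP; lia. Qed.
Lemma Q4_neq0 : Q4 != 0.
Proof. by rewrite -size_poly_eq0 sQ4; apply/eqP; lia. Qed.

Lemma coprime_UV n m : coprimep (Ux ^+ n) (Vx ^+ m).
Proof.
apply/coprimep_expl/coprimep_expr; rewrite /Vx coprimep_XsubC /root.
by rewrite -/Ux Ux_m1 mtwo_neq0.
Qed.

Lemma coprime_VU n m : coprimep (Vx ^+ n) (Ux ^+ m).
Proof.
apply/coprimep_expl/coprimep_expr; rewrite /Ux coprimep_XsubC /root.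
by rewrite -/Vx Vx_1 two_neq0.
Qed.

Lemma Q3_1 : Q3.[1] != 0.
Proof.
apply/negP => /eqP h.
have : Ux ^+ a %| N3.
  have hc : c0y 1 = 1 * (2 - 2 * a%:R) by rewrite /c0y; ring.
  have hke' : (k < a)%N by lia.
  have hek' : (a + k < a + b)%N by lia.
  apply: (@order_sol 1 a (or_introl erefl) hc hke' hek' _ HQ3).
  by rewrite /N3 hornerM h mulr0.
rewrite /N3 Gauss_dvdpr ?coprime_UV // => /(dvdp_leq Q3_neq0).
rewrite sQ3 /Ux size_exp_XsubC; lia.
Qed.

Lemma Q4_m1 : Q4.[-1] != 0.
Proof.
apply/negP => /eqP h.
have : Vx ^+ b %| N4.
  have hc : c0y (-1) = -1 * (2 - 2 * b%:R) by rewrite /c0y; ring.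
  have hke' : (k < b)%N by lia.
  have hek' : (b + k < a + b)%N by lia.
  apply: (@order_sol (-1) b (or_intror erefl) hc hke' hek' _ HQ4).
  by rewrite /N4 hornerM h mulr0.
rewrite /N4 Gauss_dvdpr ?coprime_VU // => /(dvdp_leq Q4_neq0).
rewrite sQ4 /Vx size_exp_XsubC; lia.
Qed.

Lemma N3_1 : N3.[1] != 0.
Proof. by rewrite /N3 hornerM horner_exp Vx_1 mulf_neq0 ?Q3_1 // expf_neq0 // two_neq0. Qed.
Lemma N3_m1 : N3.[-1] = 0.
Proof.
rewrite /N3 hornerM horner_exp Vx_m1 expr0n.
have -> : (b == 0%N) = false by apply/eqP; lia.
by rewrite mul0r.
Qed.
Lemma N4_m1 : N4.[-1] != 0.
Proof.
by rewrite /N4 hornerM horner_exp Ux_m1 mulf_neq0 ?Q4_m1 // expf_neq0 // mtwo_neq0.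
Qed.
Lemma N4_1 : N4.[1] = 0.
Proof.
rewrite /N4 hornerM horner_exp Ux_1 expr0n.
have -> : (a == 0%N) = false by apply/eqP; lia.
by rewrite mul0r.
Qed.

Lemma N3_neq0 : N3 != 0.
Proof. by apply: contraNneq N3_1 => ->; rewrite horner0. Qed.
Lemma N4_neq0 : N4 != 0.
Proof. by apply: contraNneq N4_m1 => ->; rewrite horner0. Qed.

Lemma size_N3 : size N3 = (a + b - k)%N.
Proof.
rewrite /N3 mulrC size_Mmonic ?Q3_neq0 ?monic_exp ?monicXsubC //.
by rewrite sQ3 /Vx size_exp_XsubC; lia.
Qed.
Lemma size_N4 : size N4 = (a + b - k)%N.
Proof.
rewrite /N4 mulrC size_Mmonic ?Q4_neq0 ?monic_exp ?monicXsubC //.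
by rewrite sQ4 /Ux size_exp_XsubC; lia.
Qed.
Lemma lead_N3 : lead_coef N3 = lead_coef Q3.
Proof. by rewrite /N3 mulrC lead_coef_Mmonic // monic_exp // monicXsubC. Qed.
Lemma lead_N4 : lead_coef N4 = lead_coef Q4.
Proof. by rewrite /N4 mulrC lead_coef_Mmonic // monic_exp // monicXsubC. Qed.

Lemma top_N3 : N3`_(a + b - k).-1 = lead_coef Q3.
Proof. by rewrite -lead_N3 /lead_coef size_N3. Qed.
Lemma top_N4 : N4`_(a + b - k).-1 = lead_coef Q4.
Proof. by rewrite -lead_N4 /lead_coef size_N4. Qed.

Lemma lc3_neq0 : lead_coef Q3 != 0. Proof. by rewrite lead_coef_eq0 Q3_neq0. Qed.
Lemma lc4_neq0 : lead_coef Q4 != 0. Proof. by rewrite lead_coef_eq0 Q4_neq0. Qed.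

Definition N2 := lead_coef Q4 *: N3 + (- lead_coef Q3) *: N4.

Lemma HN3 : Lop N3 = 0. Proof. exact: HQ3. Qed.
Lemma HN4 : Lop N4 = 0. Proof. exact: HQ4. Qed.
Lemma HN2 : Lop N2 = 0.
Proof. by rewrite /N2 Lop_lin HN3 HN4 !scaler0 addr0. Qed.

Lemma N2_1 : N2.[1] != 0.
Proof. by rewrite /N2 hornerD !hornerZ N4_1 mulr0 addr0 mulf_neq0 ?lc4_neq0 ?N3_1. Qed.
Lemma N2_m1 : N2.[-1] != 0.
Proof.
by rewrite /N2 hornerD !hornerZ N3_m1 mulr0 add0r mulf_neq0 ?oppr_eq0 ?lc3_neq0 ?N4_m1.
Qed.
Lemma N2_neq0 : N2 != 0.
Proof. by apply: contraNneq N2_1 => ->; rewrite horner0. Qed.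

Lemma size_N2 : size N2 = k.+1.
Proof.
have s0 : (0 < size N2)%N by rewrite size_poly_gt0 N2_neq0.
have := @deg_sol N2 HN2 N2_neq0; rewrite Dc_fact => /eqP; rewrite mulf_eq0 => /orP[].
  by rewrite subr_eq0 eqr_nat => /eqP <-; rewrite prednK.
set d := (size N2).-1.
have -> : (d%:R + k%:R + 1 - a%:R - b%:R : R) = (d + k + 1)%:R - (a + b)%:R.
  by rewrite !natrD; ring.
rewrite subr_eq0 eqr_nat => /eqP hd.
have : lead_coef N2 != 0 by rewrite lead_coef_eq0 N2_neq0.
rewrite /lead_coef -/d.
have -> : d = (a + b - k).-1 by lia.
by rewrite /N2 coefD !coefZ top_N3 top_N4 mulrC mulNr addrN eqxx.
Qed.

Definition Wp := Ux * Q3 * (Q4^`() * Vx - b%:R *: Q4) - Vx * Q4 * (Q3^`() * Ux - a%:R *: Q3).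

Lemma Wp_id : (N3 * N4^`() - N3^`() * N4) * (Ux * Vx) = Dab * Wp.
Proof.
rewrite /N3 /N4 /Wp /Dab !derivM !deriv_exp /Ux /Vx !derivXsubC !mul1r.
set U := 'X - 1%:P; set V := 'X - (-1)%:P.
have -> : (V ^+ b * Q3 * (U ^+ a.-1 *+ a * Q4 + U ^+ a * Q4^`()) -
   (V ^+ b.-1 *+ b * Q3 + V ^+ b * Q3^`()) * (U ^+ a * Q4)) * (U * V)
  = V ^+ b * Q3 * Q4 * V * (U ^+ a.-1 * U *+ a) + V ^+ b * Q3 * U ^+ a * Q4^`() * U * V
    - (V ^+ b.-1 * V *+ b) * Q3 * U ^+ a * Q4 * U - V ^+ b * Q3^`() * U ^+ a * Q4 * U * V
  by ring.
rewrite !expm1_mul -!mul_polyC; ring.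
Qed.

Lemma Wp_1 : Wp.[1] = 2 * a%:R * Q3.[1].
Proof.
rewrite /Wp !(hornerD, hornerN, hornerM, hornerZ, hornerX, hornerC) Q41; ring.
Qed.

Lemma Wp_1_neq0 : Wp.[1] != 0.
Proof.
rewrite Wp_1 !mulf_neq0 ?two_neq0 ?Q3_1 // pnatr_eq0; apply/eqP; lia.
Qed.

Definition gr (N : {poly R}) : R -> R := fun y => N.[y] / Dab.[y].

Lemma derive1_gr N (x : R) : x != 1 -> x != -1 ->
  derive1 (gr N) x = (N^`() * Dab - N * Dab^`()).[x] / (Dab * Dab).[x].
Proof.
move=> x1 x2; have [_ H] := @rat_is_derive R N Dab x (@Dab_neq0 x x1 x2).
by rewrite derive1E H.
Qed.

Lemma Mu_eq : Mu = Dab * (Ux * Vx).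
Proof. by rewrite /Mu /Dab !exprS; ring. Qed.

Lemma Wr_alg (M3 M4 D W U V Mu0 : {poly R}) (x : R) : D.[x] != 0 ->
  Mu0 = D * (U * V) -> (M3 * M4^`() - M3^`() * M4) * (U * V) = D * W ->
  Mu0.[x] * (M3.[x] / D.[x] * ((M4^`() * D - M4 * D^`()).[x] / (D * D).[x]) -
   (M3^`() * D - M3 * D^`()).[x] / (D * D).[x] * (M4.[x] / D.[x])) = W.[x].
Proof.
move=> Dx -> HW.
have HW' := congr1 (fun p => p.[x]) HW.
move: HW' => /=; rewrite !(hornerD, hornerN, hornerM).
move=> HW'.
have e : W.[x] = (D.[x] * W.[x]) / D.[x] by field.
rewrite -HW' in e; rewrite e.
by field.
Qed.

Lemma Wr_Wp (x : R) : x != 1 -> x != -1 -> Wr (gr N4) (gr N3) x = Wp.[x].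
Proof.
move=> x1 x2.
have Dx := @Dab_neq0 x x1 x2.
rewrite /Wr !derive1_gr // /gr.
exact: (@Wr_alg N3 N4 Dab Wp Ux Vx Mu x Dx Mu_eq Wp_id).
Qed.

Section Itv.
Variables l r : R.
Hypothesis lr : l < r.
Hypothesis Hx : forall x, inI l r x -> x != 1 /\ x != -1.

Lemma E_gr N : Lop N = 0 -> jacobi_eig a b lam l r (gr N).
Proof. by move=> HL; apply: jac_rat. Qed.

Lemma Lop_scale c N : Lop (c *: N) = c *: Lop N.
Proof. by rewrite /Lop !derivZ -!mul_polyC; ring. Qed.

Lemma gr_scale c N : (fun x => c * gr N x) = gr (c *: N).
Proof. by apply/funext => x; rewrite /gr hornerZ mulrA. Qed.

Lemma gr_zero_itv N : (forall x, inI l r x -> gr N x = 0) -> N = 0.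
Proof.
move=> H; apply: (@poly_eq0_itv l r _ lr) => x Ix.
have [x1 x2] := Hx x Ix.
have := H x Ix; rewrite /gr => /eqP; rewrite mulf_eq0 invr_eq0.
by rewrite (negPf (@Dab_neq0 x x1 x2)) orbF => /eqP.
Qed.

Lemma gr_nz N : N != 0 -> exists x, inI l r x /\ gr N x != 0.
Proof.
move=> N0; case: (pselect (exists x, inI l r x /\ gr N x != 0)) => // Hn.
exfalso; move/eqP: N0; apply; apply: gr_zero_itv => x Ix.
by case: (eqVneq (gr N x) 0) => // hx; exfalso; apply: Hn; exists x.
Qed.

Lemma lin_indep_gr N M (s : R) : N.[s] != 0 -> M.[s] = 0 -> M != 0 ->
  lin_indep l r (gr N) (gr M).
Proof.
move=> Ns Ms M0 c1 c2 H.
have P0 : c1 *: N + c2 *: M = 0.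
  apply: gr_zero_itv => x Ix; rewrite -[RHS](H x Ix) /gr hornerD !hornerZ; ring.
have c10 : c1 = 0.
  have := congr1 (fun p => p.[s]) P0; rewrite /= hornerD !hornerZ Ms mulr0 addr0 horner0.
  by move/eqP; rewrite mulf_eq0 (negPf Ns) orbF => /eqP.
split => //; move: P0; rewrite c10 scale0r add0r => /eqP.
by rewrite scaler_eq0 (negPf M0) orbF => /eqP.
Qed.

Lemma C34_ex : exists C, C != 0 /\ forall x, inI l r x -> Wr (gr N4) (gr N3) x = C.
Proof.
have [C HC] := @wronsk_const l r (gr N4) (gr N3) lr Hx (@E_gr N4 HN4) (@E_gr N3 HN3).
exists C; split => //.
have Wc : Wp - C%:P = 0.
  apply: (@poly_eq0_itv l r _ lr) => x Ix; have [x1 x2] := Hx x Ix.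
  by rewrite hornerD hornerN hornerC -(@Wr_Wp x x1 x2) HC // subrr.
have : Wp.[1] = C by move/eqP: Wc; rewrite subr_eq0 => /eqP ->; rewrite hornerC.
by move=> <-; exact: Wp_1_neq0.
Qed.

Lemma span f : jacobi_eig a b lam l r f ->
  exists c1 c2 : R, eqI l r f (fun x => c1 * gr N3 x + c2 * gr N4 x).
Proof.
move=> Jf; have [C [C0 HC]] := C34_ex.
exact: (@decomp l r f (gr N3) (gr N4) C lr Hx Jf (@E_gr N3 HN3) (@E_gr N4 HN4) C0 HC).
Qed.

Lemma size_UV al be : size (Ux ^+ al * Vx ^+ be) = (al + be).+1.
Proof.
rewrite size_Mmonic ?expf_neq0 ?Ux_neq0 ?monic_exp ?monicXsubC //.
by rewrite /Ux /Vx !size_exp_XsubC; lia.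
Qed.

Lemma UV_neq0 al be : Ux ^+ al * Vx ^+ be != 0.
Proof. by rewrite mulf_neq0 // expf_neq0 ?Ux_neq0 ?Vx_neq0. Qed.

Lemma UV_at al be (x : R) : x != 1 -> x != -1 -> (Ux ^+ al * Vx ^+ be).[x] != 0.
Proof.
move=> x1 x2; rewrite hornerM !horner_exp Ux_val Vx_val mulf_neq0 // expf_neq0 //.
  by rewrite subr_eq0.
by rewrite -[1]opprK subr_eq0.
Qed.

Lemma typed_of (F : R -> R) (P : {poly R}) (al be i : nat) (m delta : int) :
  jacobi_eig a b lam l r F -> (exists x, inI l r x /\ F x != 0) ->
  (forall x, inI l r x -> F x = P.[x] / (Ux ^+ al * Vx ^+ be).[x]) ->
  has_type P (Ux ^+ al * Vx ^+ be) i ->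
  (size P)%:Z - ((al + be).+1)%:Z = delta -> delta - dtype a b i = m ->
  typed_eigenfunction a b lam l r F i m delta.
Proof.
move=> J Nz Rep Ht Hd Hm; split => //; split => //.
exists P, (Ux ^+ al * Vx ^+ be); split; [split|split].
- exact: UV_neq0.
- move=> x Ix; have [x1 x2] := Hx x Ix; split; last exact: Rep.
  exact: UV_at.
- exact: Ht.
- by split; rewrite /rdeg size_UV ?Hd.
Qed.

Lemma E_scale c N : Lop N = 0 -> jacobi_eig a b lam l r (fun x => c * gr N x).
Proof. by move=> HL; rewrite gr_scale; apply: E_gr; rewrite Lop_scale HL scaler0. Qed.

Lemma nz_scale c N : c != 0 -> N != 0 -> exists x, inI l r x /\ c * gr N x != 0.
Proof.
move=> c0 N0.
have cN : c *: N != 0 by rewrite scaler_eq0 negb_or c0 N0.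
have [x [Ix H]] := @gr_nz (c *: N) cN.
by exists x; split => //; rewrite -(gr_scale c N) in H.
Qed.

Lemma typed_g3 c : c != 0 -> typed_eigenfunction a b lam l r
  (fun x => c * gr N3 x) 3 (a%:Z - k%:Z - 1) (- k%:Z - 1).
Proof.
move=> c0.
have P1 : (c *: Q3).[1] != 0 by rewrite hornerZ mulf_neq0 ?Q3_1.
have Pm1 : (c *: Q3).[-1] != 0 by rewrite hornerZ Q3m1 mulr1.
have [h1 h2] := @type_reg (c *: Q3) a 0 P1 Pm1.
apply: (@typed_of _ (c *: Q3) a 0).
- exact: (@E_scale c N3 HN3).
- exact: (@nz_scale c N3 c0 N3_neq0).
- move=> x Ix; have [x1 x2] := Hx x Ix.
  have hv : Vx.[x] != 0 by rewrite Vx_val -[1]opprK subr_eq0.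
  have hu : Ux.[x] != 0 by rewrite Ux_val subr_eq0.
  rewrite /gr /N3 /Dab hornerZ !hornerM !horner_exp expr0 mulr1.
  by field; rewrite !expf_neq0.
- rewrite /has_type /=; split.
    by move/h1; lia.
  exact/h2.
- by rewrite size_scale // sQ3; lia.
- by rewrite /=; lia.
Qed.

Lemma typed_g4 c : c != 0 -> typed_eigenfunction a b lam l r
  (fun x => c * gr N4 x) 4 (b%:Z - k%:Z - 1) (- k%:Z - 1).
Proof.
move=> c0.
have P1 : (c *: Q4).[1] != 0 by rewrite hornerZ Q41 mulr1.
have Pm1 : (c *: Q4).[-1] != 0 by rewrite hornerZ mulf_neq0 ?Q4_m1.
have [h1 h2] := @type_reg (c *: Q4) 0 b P1 Pm1.
apply: (@typed_of _ (c *: Q4) 0 b).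
- exact: (@E_scale c N4 HN4).
- exact: (@nz_scale c N4 c0 N4_neq0).
- move=> x Ix; have [x1 x2] := Hx x Ix.
  have hv : Vx.[x] != 0 by rewrite Vx_val -[1]opprK subr_eq0.
  have hu : Ux.[x] != 0 by rewrite Ux_val subr_eq0.
  rewrite /gr /N4 /Dab hornerZ !hornerM !horner_exp expr0 mul1r.
  by field; rewrite !expf_neq0.
- rewrite /has_type /=; split.
    exact/h1.
  by move/h2; lia.
- by rewrite size_scale // sQ4; lia.
- by rewrite /=; lia.
Qed.

Lemma typed_g2 c : c != 0 -> typed_eigenfunction a b lam l r
  (fun x => c * gr N2 x) 2 k%:Z (k%:Z - a%:Z - b%:Z).
Proof.
move=> c0.
have P1 : (c *: N2).[1] != 0 by rewrite hornerZ mulf_neq0 ?N2_1.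
have Pm1 : (c *: N2).[-1] != 0 by rewrite hornerZ mulf_neq0 ?N2_m1.
have [h1 h2] := @type_reg (c *: N2) a b P1 Pm1.
apply: (@typed_of _ (c *: N2) a b).
- exact: (@E_scale c N2 HN2).
- exact: (@nz_scale c N2 c0 N2_neq0).
- by move=> x Ix; rewrite /gr /Dab hornerZ mulrA.
- rewrite /has_type /=; split.
    by move/h1; lia.
  by move/h2; lia.
- by rewrite size_scale // size_N2; lia.
- by rewrite /=; lia.
Qed.

Lemma typed_gen (f : R -> R) (c1 c2 : R) : jacobi_eig a b lam l r f ->
  (exists x, inI l r x /\ f x != 0) ->
  eqI l r f (fun x => c1 * gr N3 x + c2 * gr N4 x) ->
  c1 != 0 -> c2 != 0 -> c1 * lead_coef Q3 + c2 * lead_coef Q4 != 0 ->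
  typed_eigenfunction a b lam l r f 2 (a%:Z + b%:Z - k%:Z - 1) (- k%:Z - 1).
Proof.
move=> Jf Nz Hf c10 c20 Hlc.
set P := c1 *: N3 + c2 *: N4.
have P1 : P.[1] != 0.
  by rewrite /P hornerD !hornerZ N4_1 mulr0 addr0 mulf_neq0 ?N3_1.
have Pm1 : P.[-1] != 0.
  by rewrite /P hornerD !hornerZ N3_m1 mulr0 add0r mulf_neq0 ?N4_m1.
have [h1 h2] := @type_reg P a b P1 Pm1.
have sP : size P = (a + b - k)%N.
  have le : (size P <= a + b - k)%N.
    rewrite /P (leq_trans (size_add _ _)) // geq_max.
    by rewrite !(leq_trans (size_scale_leq _ _)) // ?size_N3 ?size_N4.
  have top : P`_(a + b - k).-1 != 0.
    by rewrite /P coefD !coefZ top_N3 top_N4.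
  apply/eqP; rewrite eqn_leq le /=.
  have : ((a + b - k).-1 < size P)%N.
    by rewrite ltnNge; apply: contra top => h; rewrite nth_default.
  have pos : (0 < a + b - k)%N by lia.
  by rewrite (prednK pos).
apply: (@typed_of _ P a b) => //.
- move=> x Ix; rewrite (Hf x Ix) /gr /Dab /P hornerD !hornerZ.
  by field; have [x1 x2] := Hx x Ix; apply: (@Dab_neq0 x x1 x2).
- rewrite /has_type /=; split.
    by move/h1; lia.
  by move/h2; lia.
- by rewrite sP; lia.
- by rewrite /=; lia.
Qed.

Lemma main_conc :
  let E := jacobi_eig a b lam l r in
  (exists f1 f2, E f1 /\ E f2 /\ lin_indep l r f1 f2 /\
     forall f, E f -> exists c1 c2 : R,
       eqI l r f (fun x => c1 * f1 x + c2 * f2 x)) /\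
  (forall f, E f -> exists p q : {poly R}, rat_rep l r f p q) /\
  (exists g2 g3 g4 : R -> R,
     [/\ E g2, E g3 & E g4] /\
     [/\ lin_indep l r g2 g3, lin_indep l r g2 g4 & lin_indep l r g3 g4] /\
     (forall c : R, c != 0 -> typed_eigenfunction a b lam l r
        (fun x => c * g2 x) 2 k%:Z (k%:Z - a%:Z - b%:Z)) /\
     (forall c : R, c != 0 -> typed_eigenfunction a b lam l r
        (fun x => c * g3 x) 3 (a%:Z - k%:Z - 1) (- k%:Z - 1)) /\
     (forall c : R, c != 0 -> typed_eigenfunction a b lam l r
        (fun x => c * g4 x) 4 (b%:Z - k%:Z - 1) (- k%:Z - 1)) /\
     (forall f, E f ->
        (forall c : R, ~ eqI l r f (fun x => c * g2 x)) ->
        (forall c : R, ~ eqI l r f (fun x => c * g3 x)) ->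
        (forall c : R, ~ eqI l r f (fun x => c * g4 x)) ->
        typed_eigenfunction a b lam l r f 2
          (a%:Z + b%:Z - k%:Z - 1) (- k%:Z - 1))).
Proof.
move=> E.
have E3 : E (gr N3) := @E_gr N3 HN3.
have E4 : E (gr N4) := @E_gr N4 HN4.
have E2 : E (gr N2) := @E_gr N2 HN2.
have I34 : lin_indep l r (gr N3) (gr N4) := @lin_indep_gr N3 N4 1 N3_1 N4_1 N4_neq0.
have I23 : lin_indep l r (gr N2) (gr N3) := @lin_indep_gr N2 N3 (-1) N2_m1 N3_m1 N3_neq0.
have I24 : lin_indep l r (gr N2) (gr N4) := @lin_indep_gr N2 N4 1 N2_1 N4_1 N4_neq0.
split; [|split].
- by exists (gr N3), (gr N4); do 3 split => //; exact: span.
- move=> f Jf; have [c1 [c2 Hf]] := @span f Jf.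
  exists (c1 *: N3 + c2 *: N4), Dab; split; first exact: (UV_neq0 a b).
  move=> x Ix; have [x1 x2] := Hx x Ix; have Dx := @Dab_neq0 x x1 x2.
  split => //; rewrite (Hf x Ix) /gr hornerD !hornerZ.
  by field.
exists (gr N2), (gr N3), (gr N4); split; first by split.
split; first by split.
split; first exact: typed_g2.
split; first exact: typed_g3.
split; first exact: typed_g4.
move=> f Jf n2 n3 n4.
have [c1 [c2 Hf]] := @span f Jf.
have c10 : c1 != 0.
  apply/negP => /eqP c10; apply: (n4 c2) => x Ix; rewrite (Hf x Ix) c10; ring.
have c20 : c2 != 0.
  apply/negP => /eqP c20; apply: (n3 c1) => x Ix; rewrite (Hf x Ix) c20; ring.
have lc0 : c1 * lead_coef Q3 + c2 * lead_coef Q4 != 0.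
  apply/negP => /eqP H; apply: (n2 (c1 / lead_coef Q4)) => x Ix.
  have l4 := lc4_neq0.
  have e : c2 = - (c1 * lead_coef Q3) / lead_coef Q4.
    have -> : - (c1 * lead_coef Q3) = c2 * lead_coef Q4 - (c1 * lead_coef Q3 + c2 * lead_coef Q4) by ring.
    by rewrite H subr0 mulfK.
  have [x1 x2] := Hx x Ix; have Dx := @Dab_neq0 x x1 x2.
  rewrite (Hf x Ix) e /gr /N2 hornerD !hornerZ.
  by field; rewrite Dx l4.
have Nz : exists x, inI l r x /\ f x != 0.
  case: (pselect (exists x, inI l r x /\ f x != 0)) => // Hn; exfalso.
  apply: (n2 0) => x Ix; rewrite mul0r.
  by case: (eqVneq (f x) 0) => // hx; exfalso; apply: Hn; exists x.
exact: (@typed_gen f c1 c2 Jf Nz Hf c10 c20 lc0).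
Qed.

End Itv.
End Conc.
End Main.

Theorem mainTheorem20 (R : realType) (a b k : nat) (l r : R) :
  (b <= a)%N -> (k < b)%N -> l < r ->
  (r <= -1 \/ (-1 <= l /\ r <= 1) \/ 1 <= l) ->
  let lam : R := (k.+1)%:R * (k%:R - a%:R - b%:R) in
  let E := jacobi_eig a b lam l r in
  (* E_k is 2-dimensional *)
  (exists f1 f2, E f1 /\ E f2 /\ lin_indep l r f1 f2 /\
     forall f, E f -> exists c1 c2 : R,
       eqI l r f (fun x => c1 * f1 x + c2 * f2 x)) /\
  (* E_k consists of rational functions *)
  (forall f, E f -> exists p q : {poly R}, rat_rep l r f p q) /\
  (* three distinct lines L_i = span g_i *)
  (exists g2 g3 g4 : R -> R,
     [/\ E g2, E g3 & E g4] /\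
     [/\ lin_indep l r g2 g3, lin_indep l r g2 g4 & lin_indep l r g3 g4] /\
     (forall c : R, c != 0 -> typed_eigenfunction a b lam l r
        (fun x => c * g2 x) 2 k%:Z (k%:Z - a%:Z - b%:Z)) /\
     (forall c : R, c != 0 -> typed_eigenfunction a b lam l r
        (fun x => c * g3 x) 3 (a%:Z - k%:Z - 1) (- k%:Z - 1)) /\
     (forall c : R, c != 0 -> typed_eigenfunction a b lam l r
        (fun x => c * g4 x) 4 (b%:Z - k%:Z - 1) (- k%:Z - 1)) /\
     (forall f, E f ->
        (forall c : R, ~ eqI l r f (fun x => c * g2 x)) ->
        (forall c : R, ~ eqI l r f (fun x => c * g3 x)) ->
        (forall c : R, ~ eqI l r f (fun x => c * g4 x)) ->
        typed_eigenfunction a b lam l r f 2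
          (a%:Z + b%:Z - k%:Z - 1) (- k%:Z - 1))).
Proof.
move=> hb hk lr hI.
have Hx : forall x, inI l r x -> x != 1 /\ x != -1.
  move=> x /andP[lx xr].
  by split; apply/negP => /eqP ex; rewrite ex in lx xr; case: hI => [h|[[h1 h2]|h]]; lra.
have hc3 : c0y R a b (-1) = -1 * (2 - 2 * b%:R) by rewrite /c0y; ring.
have hc4 : c0y R a b 1 = 1 * (2 - 2 * a%:R) by rewrite /c0y; ring.
have hke3 : (k < b)%N by lia.
have hek3 : (b + k < a + b)%N by lia.
have hke4 : (k < a)%N by lia.
have hek4 : (a + k < a + b)%N by lia.
have [Q3 [HQ3 [Q3m1 sQ3]]] := @exists_sol R a b k (-1) b (or_intror erefl) hc3 hke3 hek3.
have [Q4 [HQ4 [Q41 sQ4]]] := @exists_sol R a b k 1 a (or_introl erefl) hc4 hke4 hek4.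
exact: (@main_conc R a b k hb hk Q3 Q4 HQ3 Q3m1 sQ3 HQ4 Q41 sQ4 l r lr Hx).
Qed.
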